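(* Let $X>0$, $n\ge1$, let $A_0,A_1$ be $X$-periodic $\mathbb{C}^{n\times n}$-valued functions in $L^2_{\rm per}([0,X])$, let $L=\partial_x^2+\partial_xA_1+A_0$ act on $L^2_{\rm per}([0,X];\mathbb{C}^n)$, and for $J\in\mathbb{N}$ let $P_J$ be the orthogonal projection onto $\mathcal{H}_J=\operatorname{span}\{e^{2\pi ikx/X}v:\ |k|\le J,\ v\in\mathbb{C}^n\}$. Let $L_J=P_JLP_J|_{\mathcal{H}_J}$ (the Hill truncation $\mathcal{D}_J^2+\mathcal{D}_J\mathcal{A}_{1,J}+\mathcal{A}_{0,J}$) and $K_J(\lambda)=P_JK(\lambda)P_J|_{\mathcal{H}_J}$, where $K(\lambda)=\partial_x(\partial_x^2-1)^{-1}A_1+(\partial_x^2-1)^{-1}(A_0+(1-\lambda)I)$. Define $D_J(\lambda)={\det}_2(I+K_J(\lambda))$ on $\mathcal{H}_J$. Then the zeros of $D_J$ coincide with the eigenvalues of the matrix $L_J$, and the order of each zero equals the algebraic multiplicity of the eigenvalue.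
   Context: In Fourier coordinates, $\mathcal{D}_J$ is the diagonal matrix of the multipliers $2\pi ik/X$, $|k|\le J$, and $\mathcal{A}_{m,J}$ is the block Toeplitz matrix $(\hat A_m(j-k))_{|j|,|k|\le J}$. On a finite-dimensional space ${\det}_2(I-A)=\det(I-A)e^{\operatorname{tr}A}$, and ${\det}_2(I+K)$ means ${\det}_2(I-(-K))$. *)

(* Defs.v *)
From mathcomp Require Import all_boot all_algebra complex.
From mathcomp Require Import all_classical all_reals all_analysis.
Set Implicit Arguments. Unset Strict Implicit. Unset Printing Implicit Defensive.
Import GRing.Theory Num.Theory.
Local Open Scope ring_scope.
Local Open Scope complex_scope.

Section Hill.
Variable R : realType.

Definition Cexp (z : R[i]) : R[i] :=
  (expR (complex.Re z))%:C * (cos (complex.Im z) +i* sin (complex.Im z)).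

(* Fredholm 2-determinant on a finite-dimensional space:
   det_2(I - A) = det(I - A) e^{tr A}.  We write det2 A for det_2(I - A). *)
Definition det2 (m : nat) (A : 'M[R[i]]_m) : R[i] :=
  \det (1%:M - A) * Cexp (\tr A).

Definition Ccont_at (g : R[i] -> R[i]) (z0 : R[i]) : Prop :=
  forall e : R, 0 < e -> exists2 d : R, 0 < d &
    forall z : R[i], `|z - z0| < d%:C -> `|g z - g z0| < e%:C.

Definition zero_order (f : R[i] -> R[i]) (z0 : R[i]) (m : nat) : Prop :=
  exists g : R[i] -> R[i],
    [/\ forall z, f z = (z - z0) ^+ m * g z, Ccont_at g z0 & g z0 != 0].

Variables (X : R) (n J : nat).

(* Fourier mode index: j : 'I_(2J+1) stands for k = j - J, |k| <= J.
   H_J is identified with C^{n(2J+1)} = blocks indexed by k. *)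
Definition freq (j : 'I_(J.*2.+1)) : int := j%:Z - J%:Z.

Notation dimJ := (\sum_(j < J.*2.+1) n)%N.

(* Fourier multiplier of d/dx on mode k: 2 pi i k / X *)
Definition dmult (j : 'I_(J.*2.+1)) : R[i] :=
  'i * ((2 * pi * (freq j)%:~R / X)%:C).

Definition DJ : 'M[R[i]]_(dimJ) := mxdiag (fun j : 'I_(J.*2.+1) => (@scalar_mx _ n (dmult j))).

(* (d^2/dx^2 - 1)^{-1} restricted to H_J (a Fourier multiplier, so it
   commutes with P_J) *)
Definition RJ : 'M[R[i]]_(dimJ) :=
  mxdiag (fun j : 'I_(J.*2.+1) => (@scalar_mx _ n (((dmult j) ^+ 2 - 1)^-1))).

(* A_{m,J} : block Toeplitz matrix (hat A_m (j - k))_{|j|,|k| <= J} *)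
Definition AJ (Ahat : int -> 'M[R[i]]_n) : 'M[R[i]]_(dimJ) :=
  \mxblock_(j < J.*2.+1, k < J.*2.+1) Ahat (freq j - freq k).

Definition LJ (A0 A1 : int -> 'M[R[i]]_n) : 'M[R[i]]_(dimJ) :=
  DJ *m DJ + DJ *m AJ A1 + AJ A0.

Definition KJ (A0 A1 : int -> 'M[R[i]]_n) (lam : R[i]) : 'M[R[i]]_(dimJ) :=
  (DJ *m RJ) *m AJ A1 + RJ *m (AJ A0 + (1 - lam)%:M).

(* D_J(lambda) = det_2(I + K_J(lambda)) = det_2(I - (-K_J(lambda))) *)
Definition DJfun (A0 A1 : int -> 'M[R[i]]_n) (lam : R[i]) : R[i] :=
  det2 (- KJ A0 A1 lam).

End Hill.

(* Main.v *)
Require Import Defs.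
From mathcomp Require Import all_boot all_algebra complex.
From mathcomp Require Import all_classical all_reals all_analysis.
From mathcomp Require Import order ring.
Import Order.TTheory GRing.Theory Num.Theory.
Import numFieldNormedType.Exports.
Local Open Scope ring_scope.
Set Implicit Arguments. Unset Strict Implicit.
Section S. Variable R : realType.
Local Open Scope classical_set_scope. Local Open Scope complex_scope.
Notation C := (R[i]^o).

Lemma posC_real (d : R[i]) : 0 < d -> d = (complex.Re d)%:C.
Proof. by case: d => a b; rewrite ltcE /= => /andP[/eqP -> _]. Qed.

Lemma posC_Re (d : R[i]) : 0 < d -> 0 < complex.Re d.
Proof. by case: d => a b; rewrite ltcE /= => /andP[]. Qed.

Lemma cvg_Ccont (g : R[i] -> R[i]) (z0 : R[i]) :
  (fun z : C => (g z : C)) @ (z0 : C) --> (g z0 : C) -> Ccont_at g z0.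
Proof.
move=> /cvgrPdist_lt H e e0.
have : (0 : C) < e%:C by rewrite ltcR.
move/H/nbhs_normP => [d d0 Hd].
exists (complex.Re d).
  exact: posC_Re.
move=> z hz; rewrite distrC; apply: (Hd z) => /=.
by rewrite distrC (posC_real d0).
Qed.

Lemma normcR (x : R) : `|x%:C| = `|x|%:C.
Proof. by rewrite normc_def /= expr0n /= addr0 sqrtr_sqr. Qed.

Lemma cont_lip (h : R[i] -> R) (f : R -> R) (z0 : R[i]) :
  (forall z w, `|h z - h w|%:C <= `|z - w|) ->
  {for h z0, continuous f} ->
  (fun z : C => ((f (h z))%:C : C)) @ (z0 : C) --> ((f (h z0))%:C : C).
Proof.
move=> hL /cvgrPdist_lt fc; apply: (proj2 (@cvgrPdist_lt _ C _ (nbhs (z0:C)) (nbhs_filter _) _ _)) => eps eps0.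
have := fc _ (posC_Re eps0).
move=> /nbhs_normP [d d0 Hd].

apply/(@nbhs_normP _ C); exists d%:C; first by rewrite /= ltcR.
move=> z /= hz.
rewrite -rmorphB normcR (posC_real eps0) ltcR; apply: Hd => /=.
by rewrite -ltcR; apply: le_lt_trans (hL _ _) hz.
Qed.

Lemma ReB (z w : R[i]) : complex.Re z - complex.Re w = complex.Re (z - w).
Proof. by case: z; case: w. Qed.
Lemma ImB (z w : R[i]) : complex.Im z - complex.Im w = complex.Im (z - w).
Proof. by case: z; case: w. Qed.

Lemma Re_lip (z w : R[i]) : `|complex.Re z - complex.Re w|%:C <= `|z - w|.
Proof. by rewrite ReB normc_ge_Re. Qed.

Lemma normi : `|'i : R[i]| = 1.
Proof. by rewrite normc_def /= expr0n /= add0r expr1n sqrtr1. Qed.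

Lemma Im_lip (z w : R[i]) : `|complex.Im z - complex.Im w|%:C <= `|z - w|.
Proof.
rewrite ImB; set x := z - w.
have -> : complex.Im x = - complex.Re (x * 'i) by rewrite ReiNIm opprK.
by rewrite normrN (le_trans (normc_ge_Re _)) // normrM normi mulr1.
Qed.


Definition cC (f : R[i] -> R[i]) (z0 : R[i]) :=
  (fun z : C => (f z : C)) @ (nbhs (z0 : C)) --> (f z0 : C).

Lemma cC_M f g z0 : cC f z0 -> cC g z0 -> cC (fun z => f z * g z) z0.
Proof. move=> hf hg; exact: (@cvgM _ C (nbhs (z0:C)) (nbhs_filter _) _ _ _ _ hf hg). Qed.
Lemma cC_D f g z0 : cC f z0 -> cC g z0 -> cC (fun z => f z + g z) z0.
Proof. move=> hf hg; exact: (@cvgD _ C C (nbhs (z0:C)) (nbhs_filter _) _ _ _ _ hf hg). Qed.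
Lemma cC_cst (c : R[i]) z0 : cC (fun=> c) z0.
Proof. exact: (@cvg_cst C (c : C) C (nbhs (z0:C)) (nbhs_filter _)). Qed.
Lemma cC_id z0 : cC id z0.
Proof. exact: (@cvg_id C (nbhs (z0:C))). Qed.
Lemma cC_ext f g z0 : (forall z, f z = g z) -> cC f z0 -> cC g z0.
Proof. move=> e; rewrite /cC e; have -> : (fun z : C => (f z : C)) = (fun z : C => (g z : C)) by apply/funext.
done. Qed.
Lemma cC_comp f g z0 : cC f z0 -> cC g (f z0) -> cC (fun z => g (f z)) z0.
Proof.
move=> hf hg.
exact: (@cvg_comp C C C (fun z : C => (f z : C)) (fun w : C => (g w : C)) (nbhs (z0:C)) (nbhs (f z0 : C)) _ hf hg).
Qed.
Lemma cC_lip (h : R[i] -> R) (f : R -> R) (z0 : R[i]) :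
  (forall z w, `|h z - h w|%:C <= `|z - w|) ->
  {for h z0, continuous f} -> cC (fun z => (f (h z))%:C) z0.
Proof. exact: cont_lip. Qed.

Lemma CexpE (w : R[i]) : Cexp w =
  (expR (complex.Re w))%:C * ((cos (complex.Im w))%:C + 'i * (sin (complex.Im w))%:C).
Proof. by rewrite /Cexp [X in _ * X = _]complexE. Qed.

Lemma cont_Cexp (w0 : R[i]) : cC (@Cexp R) w0.
Proof.
apply: (@cC_ext (fun w => (expR (complex.Re w))%:C * ((cos (complex.Im w))%:C + 'i * (sin (complex.Im w))%:C))).
  by move=> w; rewrite CexpE.
apply: cC_M; first by apply: cC_lip; [exact: Re_lip| exact: continuous_expR].
apply: cC_D; first by apply: cC_lip; [exact: Im_lip| exact: continuous_cos].
apply: cC_M; first exact: cC_cst.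
by apply: cC_lip; [exact: Im_lip| exact: continuous_sin].
Qed.

Lemma cont_poly (p : {poly R[i]}) (z0 : R[i]) : cC (horner p) z0.
Proof.
elim/poly_ind: p => [|p c IH].
  by apply: (@cC_ext (fun=> 0)) => [z|]; [rewrite horner0 | exact: cC_cst].
apply: (@cC_ext (fun z => p.[z] * z + c)) => [z|]; first by rewrite hornerMXaddC.
by apply: cC_D; [apply: cC_M => //; exact: cC_id | exact: cC_cst].
Qed.

Lemma cont_Cexp_aff (a b z0 : R[i]) : cC (fun z => Cexp (a + z * b)) z0.
Proof.
apply: (@cC_comp (fun z => a + z * b) (@Cexp R)); last exact: cont_Cexp.
by apply: cC_D; [exact: cC_cst | apply: cC_M; [exact: cC_id | exact: cC_cst]].
Qed.

Lemma cC_Ccont (g : R[i] -> R[i]) z0 : cC g z0 -> Ccont_at g z0.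
Proof. exact: cvg_Ccont. Qed.

Lemma Cexp_neq0 (w : R[i]) : Cexp w != 0.
Proof.
rewrite /Cexp mulf_neq0 //.
  by rewrite fmorph_eq0 gt_eqF // expR_gt0.
apply/negP => /eqP[hc hs].
by have := cos2Dsin2 (complex.Im w); rewrite hc hs expr0n /= addr0 => /eqP; rewrite eq_sym oner_eq0.
Qed.
End S.

Lemma mxdiag_scalM (F : comNzRingType) p (q_ : 'I_p -> nat) (a b : 'I_p -> F) :
  mxdiag (fun j => ((a j)%:M : 'M[F]_(q_ j))) *m mxdiag (fun j => ((b j)%:M : 'M[F]_(q_ j)))
  = mxdiag (fun j => ((a j * b j)%:M : 'M[F]_(q_ j))).
Proof.
rewrite {2}/mxdiag mul_mxdiag_mxblock /mxdiag; apply/eq_mxblock => i j.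
by case: eqVneq => [<-|]; rewrite ?conform_mx_id ?mulmx0 // scalar_mxM.
Qed.

Section A.
Local Open Scope complex_scope.
Variables (R : realType) (X : R) (n J : nat).
Notation N := (\sum_(j < J.*2.+1) n)%N.

Lemma dmult_neq (j : 'I_J.*2.+1) : dmult X j ^+ 2 - 1 != 0.
Proof.
rewrite /dmult exprMn sqr_i -rmorphXn mulN1r -opprD oppr_eq0.
have -> : (1 : R[i]) = (1 : R)%:C by [].
rewrite -rmorphD.
rewrite fmorph_eq0; apply/negP => /eqP h.
have : 0 < (2 * pi * (freq j)%:~R / X) ^+ 2 + 1 :> R.
  by apply: ltr_wpDl; [exact: sqr_ge0 | exact: ltr01].
by rewrite h ltxx.
Qed.

Lemma RDD : RJ X n J *m (DJ X n J *m DJ X n J) = 1%:M + RJ X n J.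
Proof.
rewrite /RJ /DJ !mxdiag_scalM -(mxdiagZ 1) -mxdiagD; apply: eq_mxdiag => j.
rewrite -raddfD /=; congr (_%:M).
have h := dmult_neq j; set d := dmult X j in h *.
rewrite -expr2; apply: (mulfI h); rewrite mulrA mulfV // mul1r mulrDr mulr1 mulfV //.
by rewrite subrK.
Qed.


Lemma DR_RD : DJ X n J *m RJ X n J = RJ X n J *m DJ X n J.
Proof. by rewrite /RJ /DJ !mxdiag_scalM; apply: eq_mxdiag => j; rewrite mulrC. Qed.

Lemma IKE (A0 A1 : int -> 'M[R[i]]_n) (lam : R[i]) :
  1%:M - - KJ X J A0 A1 lam = RJ X n J *m (LJ X J A0 A1 - lam%:M).
Proof.
rewrite /KJ /LJ opprK mulmxBr !mulmxDr RDD mulmxA -DR_RD !mul_mx_scalar scalerBl scale1r.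
set a := (_ *m _ *m _); set b := RJ X n J *m AJ J A0; set r := RJ X n J.
by rewrite !addrA; congr (_ + _); rewrite -!addrA; congr (_ + _); rewrite addrA [RHS]addrC.
Qed.

Lemma detR_neq0 : \det (RJ X n J) != 0.
Proof.
have h : RJ X n J *m (DJ X n J *m DJ X n J - 1%:M) = 1%:M by rewrite mulmxBr RDD mulmx1 addrK.
by apply/negP => /eqP h0; move: (congr1 determinant h); rewrite det_mulmx h0 mul0r det1 => /eqP; rewrite eq_sym oner_eq0.
Qed.

Lemma char_poly_horner (F : comNzRingType) m (A:'M[F]_m) a : (char_poly A).[a] = \det (a%:M - A).
Proof. rewrite horner_sum; apply: eq_bigr => s _; rewrite hornerM horner_exp !hornerE; congr (_ * _); rewrite (big_morph _ (fun p q => hornerM p q a) (hornerC 1 a)); apply: eq_bigr => i _; by rewrite !mxE !(hornerE, hornerMn). Qed.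

Definition ta (A0 A1 : int -> 'M[R[i]]_n) : R[i] :=
  - (\tr (DJ X n J *m RJ X n J *m AJ J A1) + \tr (RJ X n J *m AJ J A0) + \tr (RJ X n J)).
Definition tb : R[i] := \tr (RJ X n J).

Lemma trK (A0 A1 : int -> 'M[R[i]]_n) lam :
  \tr (- KJ X J A0 A1 lam) = ta A0 A1 + lam * tb.
Proof.
rewrite /KJ /ta /tb mulmxDr mul_mx_scalar scalerBl scale1r.
rewrite !(raddfN, raddfD, raddfB) /= !mxtraceZ.
ring.
Qed.

Lemma DJfunE (A0 A1 : int -> 'M[R[i]]_n) lam :
  DJfun X J A0 A1 lam = \det (RJ X n J) * ((-1) ^+ N * (char_poly (LJ X J A0 A1)).[lam])
     * Cexp (ta A0 A1 + lam * tb).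
Proof.
rewrite /DJfun /det2 IKE det_mulmx trK char_poly_horner; congr (_ * _ * _).
by rewrite -(opprB (lam%:M)) -scaleN1r detZ.
Qed.
End A.

Theorem lemma3p7 (R : realType) (X : R) (n : nat) (A0hat A1hat : int -> 'M[R[i]]_n)
    (J : nat) :
  0 < X -> (0 < n)%N ->
  (forall lam : R[i],
     DJfun X J A0hat A1hat lam = 0 <-> eigenvalue (LJ X J A0hat A1hat) lam) /\
  (forall lam : R[i], eigenvalue (LJ X J A0hat A1hat) lam ->
     zero_order (DJfun X J A0hat A1hat) lam
                (mup lam (char_poly (LJ X J A0hat A1hat)))).
Proof.
move=> _ _.
have detR := detR_neq0 X n J.
have sgn : (-1) ^+ (\sum_(j < J.*2.+1) n)%N != 0 :> R[i].
  by rewrite expf_neq0 // oppr_eq0 oner_eq0.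
split.
  move=> lam; rewrite eigenvalue_root_char DJfunE; split.
    move=> /eqP; rewrite mulf_eq0 (negbTE (Cexp_neq0 _)) orbF mulf_eq0 (negbTE detR) mulf_eq0 (negbTE sgn) /=.
    by [].
  by move=> /rootP h; rewrite h !(mulr0, mul0r).
move=> lam _.
set p := char_poly _.
have p0 : p != 0 by apply: monic_neq0; exact: char_poly_monic.
set m := mup lam p.
have : ('X - lam%:P) ^+ m %| p by rewrite -mup_geq.
case/dvdpP => q hq.
have nq : ~~ root q lam.
  apply/negP => /factor_theorem [q' hq'].
  have : (mup lam p <= m)%N by [].
  rewrite mup_leq // hq hq' -mulrA -exprS.
  by rewrite dvdp_mulIr.
exists (fun z => \det (RJ X n J) * (-1) ^+ (\sum_(j < J.*2.+1) n)%N * q.[z]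
            * Cexp (ta X J A0hat A1hat + z * tb X n J)).
split.
- move=> z; rewrite DJfunE -/p hq hornerM horner_exp hornerXsubC.
  move: (\det _) ((-1) ^+ _) (q.[z]) ((z - lam) ^+ m) (Cexp _) => a b c e f.
  by rewrite !mulrA; congr (_ * _); rewrite mulrC !mulrA.
- apply: cC_Ccont; apply: cC_M; last exact: cont_Cexp_aff.
  by apply: cC_M; [exact: cC_cst | exact: cont_poly].
- by rewrite mulf_neq0 ?Cexp_neq0 // mulf_neq0 // mulf_neq0.
Qed.
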